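(* Let $C,A_1,\dots,A_M$ be real symmetric $N\times N$ matrices and $b\in\mathbb{R}^M$ such that the SDP $\min\{\operatorname{Tr}(C^TX):\operatorname{Tr}(A_i^TX)=b_i\ (i=1,\dots,M),\ X\succeq0\}$ has a feasible $X\succ0$ and finite optimal value. For $t>0$ let $X_t$ be the minimizer of $\operatorname{Tr}(C^TX)-\frac1t\log\det X$ subject to $\operatorname{Tr}(A_i^TX)=b_i$, $X\succ0$. Given $t_{k-1}>0$, the function $$g_{k-1}(t)=\operatorname{Tr}(C^TX_{t_{k-1}})-\frac{N}{t_{k-1}}+\frac Nt$$ satisfies $g_{k-1}(t)\le\operatorname{Tr}(C^TX_t)$ for every $t\ge t_{k-1}$. *)

(* Defs.v *)
From mathcomp Require Import all_boot all_order all_algebra.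
From mathcomp Require Import all_classical all_reals all_analysis.
Set Implicit Arguments. Unset Strict Implicit. Unset Printing Implicit Defensive.
Import Order.TTheory GRing.Theory Num.Theory.
Local Open Scope ring_scope.

Section SDP.
Variables (R : realType) (N M : nat).

Definition sym_mx (X : 'M[R]_N) : Prop := X^T = X.

Definition psd (X : 'M[R]_N) : Prop :=
  sym_mx X /\ forall v : 'rV[R]_N, 0 <= (v *m X *m v^T) ord0 ord0.

Definition pd (X : 'M[R]_N) : Prop :=
  sym_mx X /\ forall v : 'rV[R]_N, v != 0 -> 0 < (v *m X *m v^T) ord0 ord0.

Definition affine_feasible (A : 'I_M -> 'M[R]_N) (b : 'I_M -> R) (X : 'M[R]_N) : Prop :=
  forall i : 'I_M, \tr ((A i)^T *m X) = b i.

Definition sdp_feasible A b (X : 'M[R]_N) : Prop :=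
  psd X /\ affine_feasible A b X.

Definition sdp_strictly_feasible A b (X : 'M[R]_N) : Prop :=
  pd X /\ affine_feasible A b X.

Definition sdp_obj (C X : 'M[R]_N) : R := \tr (C^T *m X).

Definition sdp_finite_value C A b : Prop :=
  (exists X, sdp_feasible A b X) /\
  (exists m : R, forall X, sdp_feasible A b X -> m <= sdp_obj C X).

Definition barrier_obj (t : R) (C X : 'M[R]_N) : R :=
  sdp_obj C X - t^-1 * ln (\det X).

Definition central_point (t : R) C A b (X : 'M[R]_N) : Prop :=
  sdp_strictly_feasible A b X /\
  forall Y, sdp_strictly_feasible A b Y -> barrier_obj t C X <= barrier_obj t C Y.

End SDP.

(* Main.v *)
Require Import Defs.
From mathcomp Require Import all_boot all_order all_algebra.
From mathcomp Require Import all_classical all_reals all_analysis.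
From mathcomp Require Import ring lra zify.
Import Order.TTheory GRing.Theory Num.Theory.
Local Open Scope ring_scope.

Section Helpers.
Variable R : realType.
Lemma chol_step n (P : 'M[R]_(1 + n)) :
  P^T = P -> (forall v : 'rV_(1 + n), v != 0 -> 0 < (v *m P *m v^T) 0 0) ->
  (forall S : 'M[R]_n, S^T = S -> (forall v : 'rV_n, v != 0 -> 0 < (v *m S *m v^T) 0 0) ->
     exists K, K \in unitmx /\ S = K *m K^T) ->
  exists L, L \in unitmx /\ P = L *m L^T.
Proof.
move=> hs hp IH.
set a := ulsubmx P 0 0; set u := ursubmx P; set D := drsubmx P.
have hul : ulsubmx P = a%:M by rewrite [LHS]mx11_scalar.
have hdl : dlsubmx P = u^T by rewrite /u trmx_ursub hs.
have hD : D^T = D by rewrite /D trmx_drsub hs.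
have hPb : P = block_mx a%:M u u^T D by rewrite -hul -hdl submxK.
have ha : 0 < a.
  have := hp (row_mx 1 0) _.
  rewrite hPb mul_row_block tr_row_mx mul_row_col trmx0 !mul0mx !mulmx0 !addr0 trmx1 mulmx1 mul1mx.
  rewrite mxE eqxx mulr1n; apply; apply/eqP => /(congr1 lsubmx); rewrite row_mxKl linear0 => /eqP.
  by rewrite oner_eq0.
set S := D - a^-1 *: (u^T *m u).
pose E := (block_mx 1 (a^-1 *: u) 0 1 : 'M[R]_(1 + n)).
pose Dg := (block_mx a%:M 0 0 S : 'M[R]_(1 + n)).
have hE : P = E^T *m Dg *m E.
  rewrite /E /Dg tr_block_mx !trmx1 trmx0 !mulmx_block.
  rewrite !mul1mx !mul0mx !mulmx0 !mulmx1 !addr0 !add0r.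
  rewrite mul_scalar_mx scalerA mulfV ?gt_eqF // scale1r.
  rewrite mul_mx_scalar linearZ /= scalerA mulfV ?gt_eqF // scale1r.
  rewrite -scalemxAr /S addrC subrK. exact: hPb.
have hEu : E \in unitmx by rewrite unitmxE det_ublock !det1 mulr1 unitr1.
have hS : S^T = S.
  by rewrite /S linearB /= hD linearZ /= trmx_mul trmxK.
have hSp : forall w : 'rV_n, w != 0 -> 0 < (w *m S *m w^T) 0 0.
  move=> w wn0.
  have := hp (row_mx 0 w *m invmx (E^T)) _.
  have -> : row_mx 0 w *m invmx E^T *m P *m (row_mx 0 w *m invmx E^T)^T =
     row_mx 0 w *m Dg *m (row_mx 0 w)^T.
    rewrite hE trmx_mul !mulmxA mulmxKV ?unitmx_tr //.
    rewrite -!mulmxA; congr (_ *m (_ *m _)).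
    by rewrite trmx_inv trmxK mulmxA mulmxV // mul1mx.
  rewrite /Dg mul_row_block tr_row_mx mul_row_col !mul0mx !mulmx0 !add0r.
  rewrite mul0mx add0r; apply.
  apply/eqP => h0; move: wn0; rewrite -[w](row_mxKr (0 : 'rV_1)).
  have : row_mx 0 w = row_mx 0 w *m invmx E^T *m E^T by rewrite mulmxKV // unitmx_tr.
  by rewrite h0 mul0mx => ->; rewrite linear0 eqxx.
have [K [Ku hK]] := IH S hS hSp.
exists (E^T *m block_mx (Num.sqrt a)%:M 0 0 K); split.
  rewrite unitmx_mul unitmx_tr hEu /= unitmxE det_lblock det_scalar expr1.
  rewrite unitrM -unitmxE Ku andbT unitfE gt_eqF // sqrtr_gt0 //.
rewrite trmx_mul trmxK !mulmxA {1}hE -[_ *m _ *m (block_mx _ _ _ _)^T]mulmxA.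
congr (_ *m _ *m _).
rewrite tr_block_mx !trmx0 tr_scalar_mx mulmx_block !mulmx0 !mul0mx !addr0 !add0r.
by rewrite -scalar_mxM -expr2 sqr_sqrtr ?ltW // -hK.
Qed.

Lemma horner_char n (A : 'M[R]_n) x : (char_poly A).[x] = \det (x%:M - A).
Proof.
rewrite /char_poly -[LHS]/(horner_eval x _) -det_map_mx; congr (\det _).
apply/matrixP => i j; rewrite !mxE /=.
by rewrite /horner_eval hornerD hornerN hornerMn hornerX hornerC.
Qed.

Lemma det_expand n (F : 'M[R]_n) : exists K, forall e, 0 < e <= 1 ->
  `|\det (1 + e *: F) - (1 + e * \tr F)| <= K * e ^+ 2.
Proof.
case: n F => [|m] F.
  exists 0 => e _; rewrite det_mx00 /mxtrace big_ord0 mulr0 addr0 subrr normr0 mul0r //.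
set p := char_poly (- F).
exists (\sum_(i < m) `|p`_i|) => e /andP[e0 e1].
have eu : e \is a GRing.unit by rewrite unitfE gt_eqF.
have h1 : 1 + e *: F = e *: (e^-1%:M - (- F)).
  by rewrite opprK scalerDr -scalemx1 scalerA mulfV ?gt_eqF // scale1r.
rewrite h1 detZ -horner_char horner_coef size_char_poly big_distrr /=.
rewrite big_ord_recr big_ord_recr /=.
have pm1 : p`_m.+1 = 1.
  by have /monicP := char_poly_monic (- F); rewrite lead_coefE size_char_poly.
have pm : p`_m = \tr F.
  by have := char_poly_trace (- F) (ltn0Sn m); rewrite /= linearN opprK.
have hi : forall i : nat, (i <= m.+1)%N -> e ^+ m.+1 * (p`_i * e^-1 ^+ i) = p`_i * e ^+ (m.+1 - i).
  move=> i him; rewrite exprB // exprVn; ring.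
rewrite !hi // ?leqnSn // pm1 pm subnn subSnn expr0 expr1.
set T := \sum_(i < m) _.
have -> : T + \tr F * e + 1 * 1 - (1 + e * \tr F) = T by ring.
rewrite (le_trans (ler_norm_sum _ _ _)) // mulr_suml ler_sum // => i _.
rewrite /= -/p hi; last by rewrite ltnW // ltnS ltnW.
rewrite normrM ler_wpM2l //.
rewrite ger0_norm; last by rewrite exprn_ge0 // ltW.
apply: ler_wiXn2l; [exact: ltW | exact: e1 | ].
by have := ltn_ord i; lia.
Qed.

Lemma tr_le n (F : 'M[R]_n) c :
  (forall e, 0 < e <= 1 -> 0 < \det (1 + e *: F) /\ ln (\det (1 + e *: F)) <= e * c) ->
  \tr F <= c.
Proof.
move=> H.
have [K HK] := @det_expand n F.
set t := \tr F.
have key : forall e, 0 < e <= 1 -> t - c <= e * (K + `|c * t| + `|c| * K).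
  move=> e he; have /andP[e0 e1] := he.
  have [x0 hl] := H e he; have hK := HK e he.
  set x := \det (1 + e *: F) in x0 hl hK.
  have lx : 1 - x^-1 <= ln x.
    have := @le_ln1Dx R (x^-1 - 1); rewrite [1 + _]addrC subrK lnV ?posrE //.
    move=> h; rewrite -lerN2 opprB; apply: h.
    have xi : 0 < x^-1 by rewrite invr_gt0.
    lra.
  have hx : x - 1 <= e * c * x.
    have := le_trans lx hl; rewrite -(ler_pM2r x0) mulrBl mulVf ?gt_eqF // mul1r.
    by rewrite mulrC.
  set r := x - (1 + e * t) in hK.
  have xr : x = 1 + e * t + r by rewrite /r addrC subrK.
  rewrite xr in hx.
  have hr : `|r| <= K * e ^+ 2 by [].
  have r1 : - r <= K * e ^+ 2 by rewrite (le_trans _ hr) // -normrN ler_norm.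
  have K0 : 0 <= K.
    by have := le_trans (normr_ge0 r) hr; rewrite pmulr_lge0 // exprn_gt0.
  have r2 : e * c * r <= `|c| * K * e ^+ 2.
    have h1 : e * c * r <= e * (`|c| * `|r|).
      by apply: le_trans (ler_norm _) _; rewrite !normrM (ger0_norm (ltW e0)) -mulrA.
    have h4 : `|c| * `|r| <= `|c| * (K * e ^+ 2) by rewrite ler_wpM2l.
    have h5 : 0 <= `|c| * (K * e ^+ 2) by rewrite mulr_ge0 // mulr_ge0 // exprn_ge0 // ltW.
    have h6 : e * (`|c| * `|r|) <= e * (`|c| * (K * e ^+ 2)) by rewrite ler_wpM2l // ltW.
    have h7 : e * (`|c| * (K * e ^+ 2)) <= `|c| * (K * e ^+ 2) by rewrite ler_piMl.
    have := le_trans h1 (le_trans h6 h7); by rewrite !mulrA.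
  have r3 : e * c * (e * t) <= e ^+ 2 * `|c * t|.
    by rewrite mulrACA -expr2 ler_wpM2l ?sqr_ge0 //; exact: ler_norm.
  have : e * (t - c) <= e * (e * (K + `|c * t| + `|c| * K)).
    rewrite mulrBr; nra.
  by rewrite ler_pM2l.
rewrite -subr_le0; apply/negP => /negP; rewrite -ltNge => d0.
set B := K + `|c * t| + `|c| * K.
have B0 : 0 <= B.
  have h := key 1; rewrite ltr01 lexx mul1r in h.
  exact: le_trans (ltW d0) (h isT).
set e := (t - c) / (t - c + B + 1).
have den : 0 < t - c + B + 1 by lra.
have e0 : 0 < e by rewrite divr_gt0.
have e1 : e <= 1 by rewrite ler_pdivrMr // mul1r; lra.
have := key e; rewrite e0 e1 => /(_ isT).
rewrite /e mulrAC ler_pdivlMr // => h.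
have : (t - c) * (t - c + B + 1) <= (t - c) * B by [].
rewrite ler_pM2l //; lra.
Qed.


Lemma pd_chol n (P : 'M[R]_n) : pd P -> exists L, L \in unitmx /\ P = L *m L^T.
Proof.
move=> [hs hp]; rewrite /sym_mx in hs.
elim: n P hs hp => [|n IH] P hs hp.
  by exists 1%:M; split; [exact: unitmx1 | rewrite [P]flatmx0 [RHS]flatmx0].
exact (@chol_step n P hs hp IH).
Qed.

Lemma det_LLt n (L : 'M[R]_n) : L \in unitmx -> 0 < \det (L *m L^T).
Proof.
rewrite det_mulmx det_tr unitmxE unitfE => h.
by rewrite -expr2 exprn_even_gt0 //= h orbT.
Qed.

Lemma trMMt_ge0 m n (M : 'M[R]_(m, n)) : 0 <= \tr (M *m M^T).
Proof.
rewrite /mxtrace; apply: sumr_ge0 => i _; rewrite mxE; apply: sumr_ge0 => j _.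
by rewrite mxE -expr2 sqr_ge0.
Qed.

Lemma first_order N M (C : 'M[R]_N) (A : 'I_M -> 'M[R]_N) b t P Q L :
  0 < t -> central_point t C A b P -> sdp_strictly_feasible A b Q ->
  L \in unitmx -> P = L *m L^T ->
  \tr (invmx L *m Q *m (invmx L)^T) - N%:R <= t * (sdp_obj C Q - sdp_obj C P).
Proof.
move=> t0 [[hPpd hPaff] hmin] [hQpd hQaff] Lu hPL.
set Li := invmx L; set W := Li *m Q *m Li^T.
have -> : \tr W - N%:R = \tr (W - 1) by rewrite raddfB /= mxtrace1.
apply: tr_le => e /andP[e0 e1].
set Y := (1 - e) *: P + e *: Q.
have hY : sdp_strictly_feasible A b Y.
  split; [split|].
  - by rewrite /sym_mx raddfD /= !linearZ /= hPpd.1 hQpd.1.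
  - move=> v vn0; rewrite /Y mulmxDr mulmxDl -!scalemxAr -!scalemxAl.
    have := hPpd.2 v vn0; have := hQpd.2 v vn0.
    move: (v *m P *m v^T) (v *m Q *m v^T) => X1 X2; rewrite !mxE; nra.
  - move=> i; rewrite /Y mulmxDr -!scalemxAr raddfD /= !mxtraceZ hPaff hQaff; ring.
have hobj : sdp_obj C Y = (1 - e) * sdp_obj C P + e * sdp_obj C Q.
  by rewrite /sdp_obj /Y mulmxDr -!scalemxAr raddfD /= !mxtraceZ.
have LW : L *m W *m L^T = Q.
  rewrite /W !mulmxA mulmxV // mul1mx -mulmxA -trmx_mul mulmxV // trmx1 mulmx1 //.
have hYL : Y = L *m (1 + e *: (W - 1)) *m L^T.
  rewrite mulmxDr mulmx1 mulmxDl -hPL -scalemxAr -scalemxAl mulmxBr mulmxBl mulmx1 LW -hPL /Y.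
  by apply/matrixP => i j; rewrite !mxE; ring.
have dY : 0 < \det Y by have [K [Ku hK]] := @pd_chol N Y hY.1; rewrite hK; exact: det_LLt.
have dP : 0 < \det P by rewrite hPL det_LLt.
set x := \det (1 + e *: (W - 1)).
have detY : \det Y = \det P * x.
  rewrite hYL hPL !det_mulmx !det_tr; rewrite /x; ring.
have x0 : 0 < x by rewrite detY pmulr_rgt0 in dY.
split => //.
have := hmin Y hY; rewrite /barrier_obj detY lnM ?posrE // hobj.
have tti : t * t^-1 = 1 by rewrite mulfV ?gt_eqF.
have ti0 : 0 < t^-1 by rewrite invr_gt0.
set cP := sdp_obj C P; set cQ := sdp_obj C Q; set lP := ln (\det P); set lx := ln x.
move=> h.
have h2 : t^-1 * lx <= e * (cQ - cP) by move: h; rewrite mulrDr; lra.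
have h3 : t * (t^-1 * lx) <= t * (e * (cQ - cP)) by rewrite ler_wpM2l // ltW.
by rewrite mulVKf ?gt_eqF // mulrCA in h3.
Qed.
End Helpers.

Theorem lemma4p11 (R : realType) (N M : nat)
  (C : 'M[R]_N) (A : 'I_M -> 'M[R]_N) (b : 'I_M -> R)
  (hC : sym_mx C) (hA : forall i, sym_mx (A i))
  (hstrict : exists X0, sdp_strictly_feasible A b X0)
  (hfin : sdp_finite_value C A b)
  (tk1 : R) (htk1 : 0 < tk1) (Xk1 : 'M[R]_N) (hXk1 : central_point tk1 C A b Xk1)
  (t : R) (ht : tk1 <= t) (Xt : 'M[R]_N) (hXt : central_point t C A b Xt) :
  sdp_obj C Xk1 - N%:R / tk1 + N%:R / t <= sdp_obj C Xt.
Proof.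
have t0 : 0 < t by exact: lt_le_trans ht.
have [L [Lu hPL]] := @pd_chol R N Xt hXt.1.1.
have [K [Ku hQK]] := @pd_chol R N Xk1 hXk1.1.1.
have ha := @first_order R N M C A b t Xt Xk1 L t0 hXt hXk1.1 Lu hPL.
have hb := @first_order R N M C A b tk1 Xk1 Xt K htk1 hXk1 hXt.1 Ku hQK.
set Li := invmx L in ha; set Ki := invmx K in hb.
set G := Li *m K; set H := Ki *m L.
have aE : Li *m Xk1 *m Li^T = G *m G^T by rewrite hQK /G trmx_mul !mulmxA.
have bE : Ki *m Xt *m Ki^T = H *m H^T by rewrite hPL /H trmx_mul !mulmxA.
have GH : G *m H = 1.
  by rewrite /G /H mulmxA -[Li *m K *m Ki]mulmxA mulmxV // mulmx1 mulVmx.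
rewrite aE in ha; rewrite bE in hb.
set aa := \tr (G *m G^T) in ha; set bb := \tr (H *m H^T) in hb.
have CS : forall l : R, 0 <= l * (l * aa) - l * N%:R - (l * N%:R - bb).
  move=> l; have := @trMMt_ge0 R N N (l *: G - H^T).
  rewrite raddfB /= linearZ /= trmxK mulmxBl !mulmxBr -!scalemxAl -!scalemxAr.
  rewrite !raddfB /= !mxtraceZ -trmx_mul mxtrace_tr (mxtrace_mulC H^T) GH mxtrace1.
  done.
set g := sdp_obj C Xk1 - sdp_obj C Xt in ha hb.
set n := N%:R in ha hb CS.
have n0 : 0 <= n by rewrite /n ler0n.
suff : g * (tk1 * t) <= n * (t - tk1).
  move=> h; rewrite -subr_ge0.
  have -> : sdp_obj C Xt - (sdp_obj C Xk1 - n / tk1 + n / t) = (n * (t - tk1) - g * (tk1 * t)) / (tk1 * t).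
    rewrite /g; field; rewrite ?gt_eqF //.
  by rewrite divr_ge0 ?subr_ge0 // mulr_ge0 // ltW.
have [g0|g0] := leP g 0.
  have : 0 <= n * (t - tk1) by rewrite mulr_ge0 // subr_ge0.
  have : 0 <= tk1 * t by rewrite mulr_ge0 // ltW.
  nra.
have hb' : bb <= n - tk1 * g by move: hb; rewrite /g; lra.
have ha' : aa <= n + t * g by lra.
set l := n / (n + t * g).
have d0 : 0 < n + t * g by nra.
have hl : l * (n + t * g) = n by rewrite /l mulfVK ?gt_eqF.
have := CS l.
have : l * (l * aa) <= l * (l * (n + t * g)).
  have l0 : 0 <= l by rewrite /l divr_ge0 // ltW.
  by rewrite ler_wpM2l // ler_wpM2l.
rewrite hl => h1 h2.
have h3 : 0 <= n - l * n - tk1 * g by lra.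
have h4 : 0 <= (n - l * n - tk1 * g) * (n + t * g) by rewrite mulr_ge0 // ltW.
have h5 : (n - l * n - tk1 * g) * (n + t * g) = n * t * g - tk1 * g * (n + t * g).
  rewrite mulrBl mulrBl -mulrA (mulrC n) mulrA hl; ring.
rewrite h5 in h4.
have : 0 <= g * (n * t - tk1 * (n + t * g)) by move: h4; rewrite -!mulrA; nra.
rewrite pmulr_rge0 // => h6; nra.
Qed.
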